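(* Let $M$ be a matroid whose ground set $E$ is a nonempty finite subset of $\mathbb{N}$, and let $m = m(M) = \max E$. If $m$ is neither a loop nor a coloop of $M$, then \[ \mathcal{S}_{\mathsf{lex}}(M) \;=\; \mathcal{S}_{\mathsf{lex}}(M \backslash m)\;\cup\;\mathcal{S}_{\mathsf{lex}}(M/m)\;\cup\;\Big(m \ast \big(\mathcal{S}_{\mathsf{lex}}(M\backslash m)\cap \mathcal{S}_{\mathsf{lex}}(M/m)\big)\Big). \] If $m$ is a coloop, then $\mathcal{S}_{\mathsf{lex}}(M) = \mathcal{S}_{\mathsf{lex}}(M\backslash m)$, and if $m$ is a loop, then $\mathcal{S}_{\mathsf{lex}}(M) = \mathcal{S}_{\mathsf{lex}}(M/m)$.
   Context: For a matroid $M$ on a finite ground set $E \subset \mathbb{N}$ with set of bases $\mathcal{B}(M)$, its basis configuration is $V_M = \{\mathbf{e}_B : B \in \mathcal{B}(M)\}\subseteq\{0,1\}^E$, where $\mathbf{e}_B$ is the characteristic vector of $B$. Let $I(V_M)\subseteq \mathbb{R}[x_e : e\in E]$ be the vanishing ideal of $V_M$, and use the lexicographic term order with $x_e \succ x_f$ whenever $e<f$ (i.e. $\mathbf{x}^\alpha\succ\mathbf{x}^\beta$ iff at the smallest index where $\alpha$ and $\beta$ differ, $\alpha$ is larger). The lexicographic standard complex is $\mathcal{S}_{\mathsf{lex}}(M) = \{\tau\subseteq E : \mathbf{x}^\tau=\prod_{i\in\tau}x_i \notin \mathrm{in}(I(V_M))\}$, where $\mathrm{in}(I)$ is the initial ideal.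 (If $E=\emptyset$, $\mathcal{S}_{\mathsf{lex}}(M)=\{\emptyset\}$.) $M\backslash m$ and $M/m$ denote deletion and contraction of $m$ (matroids on $E\setminus\{m\}$). For a simplicial complex $K$ and a vertex $v$ not in $K$, the cone is $v\ast K = K\cup\{\sigma\cup\{v\}:\sigma\in K\}$. *)

(* Defs.v *)
From HB Require Import structures.
From mathcomp Require Import all_boot all_order all_algebra finmap.
From mathcomp Require Import mpoly.
From mathcomp Require Import reals.

Set Implicit Arguments.
Unset Strict Implicit.
Unset Printing Implicit Defensive.

Local Open Scope fset_scope.
Local Open Scope ring_scope.

Definition is_matroid (E : {fset nat}) (Bs : {fset {fset nat}}) : Prop :=
  [/\ Bs != fset0,
      (forall B, B \in Bs -> B `<=` E) &
      (forall B1 B2, B1 \in Bs -> B2 \in Bs ->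
         forall x, x \in B1 `\` B2 ->
           exists2 y, y \in B2 `\` B1 & (B1 `\ x) `|` [fset y] \in Bs)].

Definition is_loop (Bs : {fset {fset nat}}) (e : nat) : bool :=
  all (fun B : {fset nat} => e \notin B) Bs.
Definition is_coloop (Bs : {fset {fset nat}}) (e : nat) : bool :=
  all (fun B : {fset nat} => e \in B) Bs.

Definition del_bases (Bs : {fset {fset nat}}) (e : nat) : {fset {fset nat}} :=
  if is_coloop Bs e then [fset B `\ e | B in Bs]
  else [fset B in Bs | e \notin B].

Definition con_bases (Bs : {fset {fset nat}}) (e : nat) : {fset {fset nat}} :=
  if is_loop Bs e then Bs
  else [fset B `\ e | B in [fset B in Bs | e \in B]].

(* The variables of {mpoly R[#|`E|]} are indexed by 'I_#|`E|; the
   variable number i is x_e where e is the i-th smallest element of E. *)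
Definition elt_of (E : {fset nat}) (i : nat) : nat := nth 0%N (sort leq E) i.

Definition char_pt (R : realType) (E : {fset nat}) (B : {fset nat})
  : 'I_#|`E| -> R :=
  fun i => ((elt_of E i \in B) : nat)%:R.

Definition vanishing_ideal (R : realType) (E : {fset nat})
  (Bs : {fset {fset nat}}) (p : {mpoly R[#|`E|]}) : Prop :=
  forall B, B \in Bs -> p.@[@char_pt R E B] = 0.

(* Since smaller indices are
   smaller elements of E, this is lex with x_e > x_f whenever e < f. *)
Definition lex_lt (n : nat) (a b : 'X_{1..n}) : Prop :=
  exists i : 'I_n, (forall j : 'I_n, (j < i)%N -> a j = b j) /\ (a i < b i)%N.

Definition lead_mon (R : realType) (n : nat) (p : {mpoly R[n]})
  (m : 'X_{1..n}) : Prop :=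
  m \in msupp p /\ (forall m', m' \in msupp p -> m' != m -> lex_lt m' m).

Definition in_initial_ideal (R : realType) (n : nat)
  (I : {mpoly R[n]} -> Prop) (p : {mpoly R[n]}) : Prop :=
  exists (k : nat) (g s : 'I_k -> {mpoly R[n]}),
    (forall i, exists f, I f /\ exists m, lead_mon f m /\ s i = f@_m *: 'X_[m])
    /\ p = \sum_(i < k) g i * s i.

Definition sqfree_mon (E : {fset nat}) (tau : {fset nat}) : 'X_{1..#|`E|} :=
  [multinom ((elt_of E i \in tau) : nat) | i < #|`E|].

Definition complex := {fset nat} -> Prop.

Definition cunion (K L : complex) : complex := fun t => K t \/ L t.
Definition cinter (K L : complex) : complex := fun t => K t /\ L t.
Definition ccone (v : nat) (K : complex) : complex :=
  fun t => K t \/ exists2 s, K s & t = s `|` [fset v].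

Definition Slex (R : realType) (E : {fset nat}) (Bs : {fset {fset nat}})
  : complex :=
  fun tau => tau `<=` E /\
    ~ in_initial_ideal (@vanishing_ideal R E Bs) 'X_[sqfree_mon E tau].

(* Main.v *)
Require Import Defs.
From HB Require Import structures.
From mathcomp Require Import all_boot all_order all_algebra finmap.
From mathcomp Require Import mpoly.
From mathcomp Require Import reals.
From Stdlib Require Import Classical FunctionalExtensionality PropExtensionality.

Set Implicit Arguments.
Unset Strict Implicit.
Unset Printing Implicit Defensive.
Import GRing.Theory.
Local Open Scope fset_scope.
Local Open Scope ring_scope.


Definition lexlt (s t : {fset nat}) : Prop :=
  exists e, [/\ e \in t, e \notin s & forall e', (e' < e)%N -> (e' \in s) = (e' \in t)].

Section Lex.
Variable m : nat.
Definition lowm (s : {fset nat}) := forall e, e \in s -> (e < m)%N.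
Definition addm (a : bool) s := if a then s `|` [fset m] else s.
Lemma in_addm a s e : (e \in addm a s) = (e \in s) || a && (e == m).
Proof. by case: a; rewrite /addm ?inE ?orbF. Qed.

Lemma lex_addm a b s r : lowm s -> lowm r ->
  lexlt (addm a s) (addm b r) <-> (lexlt s r \/ [/\ s = r, ~~ a & b]).
Proof.
move=> ls lr; split.
- case=> e [eb ea eq]; rewrite !in_addm in eb ea.
  have [em|em] := eqVneq e m.
  + subst e; have mr : m \notin r by apply/negP=> /lr; rewrite ltnn.
    have ms : m \notin s by apply/negP=> /ls; rewrite ltnn.
    rewrite (negPf mr) eqxx /= andbT in eb.
    rewrite (negPf ms) eqxx /= andbT in ea.
    right; split=> //; apply/fsetP=> x.
    case: (ltnP x m) => hx.
      by have := eq x hx; rewrite !in_addm (ltn_eqF hx) !andbF !orbF.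
    apply/idP/idP=> [/ls|/lr]; by rewrite ltnNge hx.
  + rewrite (negPf em) !andbF !orbF in eb ea.
    left; exists e; split=> // e' he'.
    have := eq e' he'; rewrite !in_addm.
    have : (e' < m)%N by apply: ltn_trans he' (lr _ eb).
    by move/ltn_eqF => ->; rewrite !andbF !orbF.
- case=> [[e [eb ea eq]]| [<- /negPf an ->]].
  + have em := lr _ eb.
    exists e; rewrite !in_addm (ltn_eqF em) !andbF !orbF; split=> // e' he'.
    by rewrite !in_addm eq // (ltn_eqF (ltn_trans he' em)) !andbF.
  + have ms : m \notin s by apply/negP=> /ls; rewrite ltnn.
    exists m; rewrite !in_addm an eqxx (negPf ms) /= ?orbT; split=> //.
    by move=> e' he'; rewrite !inE (ltn_eqF he') orbF.
Qed.
End Lex.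


Definition ev (R : ringType) (L : seq ({fset nat} * R)) (B : {fset nat}) : R :=
  \sum_(p <- L | p.1 `<=` B) p.2.
Definition coef (R : ringType) (L : seq ({fset nat} * R)) (t : {fset nat}) : R :=
  \sum_(p <- L | p.1 == t) p.2.
Definition NS (R : ringType) (E : {fset nat}) (P : {fset {fset nat}}) t : Prop :=
  exists L : seq ({fset nat} * R),
    [/\ (forall p, p \in L -> p.1 `<=` E /\ (p.1 = t \/ lexlt p.1 t)),
        coef L t != 0 & forall B, B \in P -> ev L B = 0].

Lemma lexlt_irr s : ~ lexlt s s.
Proof. by case=> e [h1 h2 _]; rewrite h1 in h2. Qed.

Section Lists.
Variable R : fieldType.
Implicit Types (L g h : seq ({fset nat} * R)).

Lemma ev_cat L1 L2 B : ev (L1 ++ L2) B = ev L1 B + ev L2 B.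
Proof. by rewrite /ev big_cat. Qed.
Lemma coef_cat L1 L2 t : coef (L1 ++ L2) t = coef L1 t + coef L2 t.
Proof. by rewrite /coef big_cat. Qed.

Definition scl (k : R) (L : seq ({fset nat} * R)) : seq ({fset nat} * R) := map (fun p => (p.1, k * p.2)) L.
Lemma ev_scl k L B : ev (scl k L) B = k * ev L B.
Proof. by rewrite /ev big_map mulr_sumr. Qed.
Lemma coef_scl k L t : coef (scl k L) t = k * coef L t.
Proof. by rewrite /coef big_map mulr_sumr. Qed.
Lemma mem_scl k L p : p \in scl k L -> exists2 q, q \in L & p.1 = q.1.
Proof. by case/mapP=> q qL ->; exists q. Qed.

Lemma ev_filt L t B : ev L B =
  ev (filter (fun p => p.1 != t) L) B + (if t `<=` B then coef L t else 0).
Proof.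
rewrite /ev /coef big_filter_cond (bigID (fun p => p.1 == t)) /= addrC; congr (_ + _).
  by apply: eq_bigl => p; rewrite andbC.
case: ifP => tB.
  by apply: eq_bigl => p; case: eqP => [->|]; rewrite ?tB ?andbF.
by rewrite big1 // => p /andP [pB /eqP pt]; rewrite pt tB in pB.
Qed.

Lemma coef_out E L t : (forall p, p \in L -> p.1 `<=` E) -> ~~ (t `<=` E) -> coef L t = 0.
Proof.
move=> hL tE; rewrite /coef big_seq_cond big1 // => p /andP [pL /eqP pt].
by have := hL p pL; rewrite pt (negPf tE).
Qed.

Section M.
Variable m : nat.
Definition mapm (h : seq ({fset nat} * R)) : seq ({fset nat} * R) := map (fun p => (p.1 `|` [fset m], p.2)) h.
Definition join (g h : seq ({fset nat} * R)) : seq ({fset nat} * R) := g ++ mapm h.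
Definition splitZ (L : seq ({fset nat} * R)) : seq ({fset nat} * R) := filter (fun p => m \notin p.1) L.
Definition splitO (L : seq ({fset nat} * R)) : seq ({fset nat} * R) := map (fun p => (p.1 `\ m, p.2)) (filter (fun p => m \in p.1) L).

Lemma subUm s B : (s `|` [fset m] `<=` B) = (m \in B) && (s `<=` B).
Proof. by rewrite fsubUset fsub1set andbC. Qed.

Lemma sub_D1 s B : m \in B -> (s `\ m `<=` B `\ m) = (s `<=` B).
Proof.
move=> mB; apply/fsubsetP/fsubsetP => h x.
  by move=> xs; case: (eqVneq x m) => [->//|xm]; have := h x; rewrite !inE xm xs => /(_ isT) /andP[].
by rewrite !inE => /andP [xm xs]; rewrite xm h.
Qed.

Lemma sub_low s B : m \notin s -> (s `<=` B `\ m) = (s `<=` B).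
Proof.
move=> ms; apply/fsubsetP/fsubsetP => h x xs.
  by have := h x xs; rewrite inE => /andP [].
rewrite !inE h // andbT; case: eqP => // xm; by rewrite -xm xs in ms.
Qed.

Lemma D1_id B : m \notin B -> B `\ m = B.
Proof. by move=> mB; apply/fsetP=> x; rewrite !inE; case: (eqVneq x m) => // ->; rewrite (negPf mB). Qed.

Lemma Um_D1 s : m \in s -> (s `\ m) `|` [fset m] = s.
Proof. by move=> ms; apply/fsetP=> x; rewrite !inE; case: (eqVneq x m) => [->|] /=; rewrite ?ms ?orbF. Qed.

Lemma D1_Um s : m \notin s -> (s `|` [fset m]) `\ m = s.
Proof. by move=> ms; apply/fsetP=> x; rewrite !inE; case: (eqVneq x m) => [->|] /=; rewrite ?(negPf ms) ?orbF. Qed.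

Lemma ev_mapm h B : ev (mapm h) B = if m \in B then ev h B else 0.
Proof.
rewrite /ev big_map; case: ifP => mB.
  by apply: eq_bigl => p; rewrite subUm mB.
by rewrite big_pred0 // => p; rewrite subUm mB.
Qed.

Lemma coef_mapm h t : (forall p, p \in h -> m \notin p.1) ->
  coef (mapm h) t = if m \in t then coef h (t `\ m) else 0.
Proof.
move=> hh; rewrite /coef big_map big_seq_cond.
case: ifP => mt.
  rewrite [RHS]big_seq_cond; apply: eq_bigl => p; case pH: (p \in h) => //=.
  apply/eqP/eqP => [<-|->]; first by rewrite D1_Um ?hh.
  by rewrite Um_D1.
rewrite big_pred0 // => p; case pH: (p \in h) => //=.
by apply/negP=> /eqP pt; move: mt; rewrite -pt !inE eqxx orbT.
Qed.

Lemma coef_low g t : (forall p, p \in g -> m \notin p.1) -> m \in t -> coef g t = 0.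
Proof.
move=> hg mt; rewrite /coef big_seq_cond big1 // => p /andP [pg /eqP pt].
by have := hg p pg; rewrite pt mt.
Qed.

Lemma ev_low g B : (forall p, p \in g -> m \notin p.1) -> ev g (B `\ m) = ev g B.
Proof.
move=> hg; rewrite /ev big_seq_cond [RHS]big_seq_cond; apply: eq_bigl => p.
by case pg: (p \in g) => //=; rewrite sub_low ?hg.
Qed.

Lemma splitZ_low L (p : {fset nat} * R) : p \in splitZ L -> m \notin p.1.
Proof. by rewrite mem_filter => /andP []. Qed.
Lemma splitO_low L (p : {fset nat} * R) : p \in splitO L -> m \notin p.1.
Proof. by case/mapP => q _ ->; rewrite !inE eqxx. Qed.
Lemma mapm_low h (p : {fset nat} * R) : p \in mapm h -> m \in p.1.
Proof. by case/mapP => q _ ->; rewrite !inE eqxx orbT. Qed.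

Lemma ev_split L B : ev L B = ev (splitZ L) B + ev (mapm (splitO L)) B.
Proof.
rewrite /ev /splitZ /splitO /mapm big_filter_cond !big_map big_filter_cond.
rewrite (bigID (fun p => m \in p.1)) /= addrC; congr (_ + _).
  by apply: eq_bigl => p; rewrite andbC.
apply: eq_bigl => p; case mp: (m \in p.1); rewrite ?andbF //=.
by rewrite Um_D1 // andbT.
Qed.

Lemma coef_split L t : coef L t = coef (splitZ L) t + coef (mapm (splitO L)) t.
Proof.
rewrite /coef /splitZ /splitO /mapm big_filter_cond !big_map big_filter_cond.
rewrite (bigID (fun p => m \in p.1)) /= addrC; congr (_ + _).
  by apply: eq_bigl => p; rewrite andbC.
apply: eq_bigl => p; case mp: (m \in p.1); rewrite ?andbF //=.
by rewrite Um_D1 // andbT.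
Qed.

End M.
End Lists.


Section Comb.
Variable R : fieldType.
Variables (E : {fset nat}) (m : nat).
Hypothesis hmE : m \in E.
Hypothesis hmax : forall e, e \in E -> (e <= m)%N.

Lemma lowE s : s `<=` E `\ m -> lowm m s.
Proof.
move=> /fsubsetP h e /h; rewrite !inE => /andP [em eE].
by rewrite ltn_neqAle em hmax.
Qed.

Lemma subE s : s `<=` E `\ m -> s `<=` E.
Proof. by move=> h; apply: fsubset_trans h (fsubD1set _ _). Qed.

Lemma subD s : s `<=` E -> s `\ m `<=` E `\ m.
Proof. by move=> h; apply: fsetSD. Qed.

Lemma addm_split s : addm m (m \in s) (s `\ m) = s.
Proof. by rewrite /addm; case: ifP => ms; [rewrite Um_D1 | rewrite D1_id ?ms]. Qed.

Lemma notin_low s : s `<=` E `\ m -> m \notin s.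
Proof. by move=> /lowE h; apply/negP => /h; rewrite ltnn. Qed.

Lemma NS_A1 P t : t `<=` E `\ m -> NS R E P t ->
  NS R (E `\ m) [fset B in P | m \notin B] t.
Proof.
move=> tE [L [hL hc hv]]; exists (splitZ m L); split.
- move=> p; rewrite mem_filter => /andP [mp pL]; have [pE pt] := hL p pL.
  by split=> //; rewrite sub_low.
- by move: hc; rewrite (coef_split m) coef_mapm ?(negPf (notin_low tE)) ?addr0 // => p /splitO_low.
- move=> B; rewrite !inE => /andP [BP mB]; have := hv B BP.
  by rewrite (ev_split m) ev_mapm (negPf mB) addr0.
Qed.

Lemma lex_dm s t : s `<=` E -> t `<=` E `\ m -> lexlt s t -> lexlt (s `\ m) t.
Proof.
move=> sE tE; rewrite -{1}(addm_split s) -{1}(_ : addm m false t = t) //.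
by case/(lex_addm _ _ (lowE (subD sE)) (lowE tE)) => // -[].
Qed.

Lemma NS_A2 P t : t `<=` E `\ m -> NS R E P t ->
  NS R (E `\ m) [fset B `\ m | B in [fset B in P | m \in B]] t.
Proof.
move=> tE [L [hL hc hv]].
exists (map (fun p => (p.1 `\ m, p.2)) L); split.
- move=> _ /mapP [p pL ->] /=; have [pE pt] := hL p pL.
  split; first exact: subD.
  case: pt => [->|pt]; first by left; rewrite D1_id // notin_low.
  by right; apply: lex_dm.
- suff -> : coef (map (fun p => (p.1 `\ m, p.2)) L) t = coef L t by [].
  rewrite /coef big_map big_seq_cond [RHS]big_seq_cond.
  apply: eq_bigl => p; case pL: (p \in L) => //=.
  have [pE [pt|pt]] := hL p pL.
    by rewrite pt eqxx D1_id ?eqxx // notin_low.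
  have -> : (p.1 == t) = false by apply/negP => /eqP e; rewrite e in pt; exact: lexlt_irr pt.
  apply/negbTE/negP => /eqP e; move: pt; rewrite -(addm_split p.1) e.
  rewrite -{2}(_ : addm m false t = t) //.
  by case/(lex_addm _ _ (lowE tE) (lowE tE)) => [/lexlt_irr|[]].
- move=> _ /imfsetP [B /= BP ->]; move: BP; rewrite !inE => /andP [BP mB].
  rewrite -(hv B BP) /ev big_map; apply: eq_bigl => p /=.
  by rewrite sub_D1.
Qed.

Lemma entry_low (L : seq ({fset nat} * R)) t :
  (forall p, p \in L -> p.1 `<=` E `\ m /\ (p.1 = t \/ lexlt p.1 t)) ->
  forall p, p \in L -> m \notin p.1.
Proof. by move=> hL p /hL [/notin_low]. Qed.

Lemma NS_A3 (P : {fset {fset nat}}) t : t `<=` E `\ m ->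
  NS R (E `\ m) [fset B in P | m \notin B] t ->
  NS R (E `\ m) [fset B `\ m | B in [fset B in P | m \in B]] t ->
  NS R E P t.
Proof.
move=> tE [L0 [hL0 hc0 hv0]] [L1 [hL1 hc1 hv1]].
set a := coef L0 t; set b := coef L1 t.
set h0 := scl (a / b) L1 ++ scl (-1) L0.
set h := filter (fun p => p.1 != t) h0.
have hh0 : forall q, q \in h0 -> q.1 `<=` E `\ m /\ (q.1 = t \/ lexlt q.1 t).
  move=> q; rewrite mem_cat => /orP [] /mem_scl [q' /[swap] ->].
    exact: hL1.
  exact: hL0.
have hh : forall q, q \in h -> q.1 `<=` E `\ m /\ lexlt q.1 t.
  move=> q; rewrite mem_filter => /andP [qt /hh0 [qE [/eqP|]]]; last by [].
  by rewrite (negPf qt).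
have hlow : forall q, q \in h -> m \notin q.1 by move=> q /hh [/notin_low].
exists (L0 ++ mapm m h); split.
- move=> p; rewrite mem_cat => /orP [/hL0 [pE pt]|/mapP [q qh ->] /=].
    by split=> //; apply: subE.
  have [qE qt] := hh q qh; split.
    by rewrite fsubUset fsub1set hmE andbT subE.
  right; apply: (proj2 (lex_addm true false (lowE qE) (lowE tE))).
  by left.
- by rewrite coef_cat coef_mapm // (negPf (notin_low tE)) addr0.
- move=> B BP; rewrite ev_cat ev_mapm; case: ifP => mB; last first.
    by rewrite addr0 hv0 // !inE BP mB.
  have c0 : coef h0 t = 0.
    by rewrite coef_cat !coef_scl -/a -/b divfK // mulN1r subrr.
  have -> : ev h B = ev h0 B by rewrite [RHS](ev_filt _ t) c0 if_same addr0.
  rewrite ev_cat !ev_scl mulN1r addrCA subrr addr0.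
  rewrite -(@ev_low _ m L1 B (entry_low hL1)) hv1 ?mulr0 //.
  by apply/imfsetP; exists B => //; rewrite !inE BP mB.
Qed.

Lemma lexU s r : s `<=` E `\ m -> r `<=` E `\ m -> (r = s \/ lexlt r s) -> lexlt r (s `|` [fset m]).
Proof.
move=> sE rE h; apply: (proj2 (lex_addm false true (lowE rE) (lowE sE))).
by case: h => [->|]; [right | left].
Qed.

Lemma lexUU s r : s `<=` E `\ m -> r `<=` E `\ m -> lexlt r s -> lexlt (r `|` [fset m]) (s `|` [fset m]).
Proof.
move=> sE rE h; apply: (proj2 (lex_addm true true (lowE rE) (lowE sE))).
by left.
Qed.

Lemma subUmE s : s `<=` E `\ m -> s `|` [fset m] `<=` E.
Proof. by move=> h; rewrite fsubUset fsub1set hmE andbT subE. Qed.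

Lemma NS_B (P : {fset {fset nat}}) s : s `<=` E `\ m ->
  NS R E P (s `|` [fset m]) <->
  (NS R (E `\ m) [fset B in P | m \notin B] s \/
   NS R (E `\ m) [fset B `\ m | B in [fset B in P | m \in B]] s).
Proof.
move=> sE; have msm : m \in s `|` [fset m] by rewrite !inE eqxx orbT.
have ms := notin_low sE.
split; last first.
  case=> [[g [hg hc hv]]|[g [hg hc hv]]].
    have glow := entry_low hg.
    have slow : forall q, q \in scl (-1) g -> m \notin q.1.
      by move=> q /mem_scl [q' /glow + ->].
    exists (g ++ mapm m (scl (-1) g)); split.
    - move=> p; rewrite mem_cat => /orP [/hg [pE pt]|/mapP [q /mem_scl [q' q'g ->] -> /=]].
        by split; [apply: subE | right; apply: lexU].
      have [qE qt] := hg q' q'g; split; first exact: subUmE.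
      by case: qt => [->|qt]; [left | right; apply: lexUU].
    - rewrite coef_cat coef_mapm // msm (@coef_low _ m) // add0r D1_Um // coef_scl.
      by rewrite mulN1r oppr_eq0.
    - move=> B BP; rewrite ev_cat ev_mapm ev_scl; case: ifP => mB.
        by rewrite mulN1r subrr.
      by rewrite addr0 hv // !inE BP mB.
  have glow := entry_low hg.
  exists (mapm m g); split.
  - move=> _ /mapP [q qg ->] /=.
    have [qE qt] := hg q qg; split; first exact: subUmE.
    by case: qt => [->|qt]; [left | right; apply: lexUU].
  - by rewrite coef_mapm // msm D1_Um.
  - move=> B BP; rewrite ev_mapm; case: ifP => // mB.
    rewrite -(@ev_low _ m g B glow) hv //.
    by apply/imfsetP; exists B => //; rewrite !inE BP mB.
case=> L [hL hc hv].
have hc' : coef L (s `|` [fset m]) = coef (splitO m L) s.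
  rewrite (coef_split m) (@coef_low _ m) ?add0r; last 2 first.
  - exact: splitZ_low.
  - by [].
  by rewrite coef_mapm ?msm ?D1_Um //; exact: splitO_low.
have hg : forall p, p \in splitZ m L -> p.1 `<=` E `\ m /\ (p.1 = s \/ lexlt p.1 s).
  move=> p; rewrite mem_filter => /andP [mp /hL [pE pt]].
  split; first by rewrite sub_low.
  case: pt => [pt|]; first by rewrite pt msm in mp.
  have pE' : p.1 `<=` E `\ m by rewrite sub_low.
  case/(lex_addm false true (lowE pE') (lowE sE)) => [|[]]; by [right | left].
have hh : forall p, p \in splitO m L -> p.1 `<=` E `\ m /\ (p.1 = s \/ lexlt p.1 s).
  move=> _ /mapP [p + ->] /=; rewrite mem_filter => /andP [mp /hL [pE pt]].
  split; first exact: subD.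
  case: pt => [->|pt]; first by left; rewrite D1_Um.
  move: pt; rewrite -{1}(addm_split p.1) mp.
  by case/(lex_addm true true (lowE (subD pE)) (lowE sE)) => [|[]]; [right|].
have [c0|c0] := eqVneq (coef (splitZ m L) s) 0; [right | left].
  exists (splitZ m L ++ splitO m L); split.
  - by move=> p; rewrite mem_cat => /orP [/hg|/hh].
  - by rewrite coef_cat c0 add0r -hc'.
  - move=> _ /imfsetP [B /= BP ->]; move: BP; rewrite !inE => /andP [BP mB].
    rewrite ev_cat !ev_low; try by [exact: splitZ_low | exact: splitO_low].
    by have := hv B BP; rewrite (ev_split m) ev_mapm mB.
exists (splitZ m L); split => //.
move=> B; rewrite !inE => /andP [BP mB].
by have := hv B BP; rewrite (ev_split m) ev_mapm (negPf mB) addr0.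
Qed.

Lemma NS_vac (P : {fset {fset nat}}) E0 t : t `<=` E0 -> (forall B, B \in P -> False) -> NS R E0 P t.
Proof.
move=> tE hP; exists [:: (t, 1)]; split.
- by move=> p; rewrite inE => /eqP -> /=; split; [|left].
- by rewrite /coef big_cons big_nil eqxx addr0 oner_eq0.
- by move=> B /hP.
Qed.

End Comb.


Section Elt.
Variable E : {fset nat}.
Local Notation n := #|`E|.
Local Notation elt := (elt_of E).

Lemma size_sE : size (sort leq E) = n.
Proof. by rewrite size_sort. Qed.

Lemma elt_in (i : 'I_n) : elt i \in E.
Proof. by rewrite /elt_of -(mem_sort leq) mem_nth // size_sE. Qed.

Lemma sorted_sE : sorted leq (sort leq E).
Proof. exact: (sort_sorted leq_total). Qed.

Lemma sortedlt_sE : sorted ltn (sort leq E).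
Proof. by rewrite ltn_sorted_uniq_leq sort_uniq fset_uniq sorted_sE. Qed.

Lemma elt_lt (i j : 'I_n) : (elt i < elt j)%N = (i < j)%N.
Proof.
apply/idP/idP => h.
  rewrite ltnNge; apply/negP => ji.
  have := sorted_leq_nth leq_trans leqnn 0%N sorted_sE.
  move=> /(_ j i); rewrite !inE size_sE !ltn_ord => /(_ isT isT ji).
  by rewrite leqNgt h.
have := sorted_ltn_nth ltn_trans 0%N sortedlt_sE.
by move=> /(_ i j); rewrite !inE size_sE !ltn_ord => /(_ isT isT h).
Qed.

Lemma elt_inj (i j : 'I_n) : elt i = elt j -> i = j.
Proof.
move=> e; apply/val_inj/eqP; rewrite eqn_leq; apply/andP; split; rewrite leqNgt.
  by rewrite -(elt_lt j i) e ltnn.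
by rewrite -(elt_lt i j) e ltnn.
Qed.

Lemma elt_onto e : e \in E -> exists i : 'I_n, elt i = e.
Proof.
move=> eE; have h : (index e (sort leq E) < n)%N.
  by rewrite -size_sE index_mem mem_sort.
by exists (Ordinal h); rewrite /elt_of /= nth_index // mem_sort.
Qed.

Definition supp (mm : 'X_{1..n}) : {fset nat} :=
  [fset e in E | [exists i : 'I_n, (mm i != 0%N) && (elt i == e)]].

Lemma in_supp_elt mm (i : 'I_n) : (elt i \in supp mm) = (mm i != 0%N).
Proof.
rewrite /supp !inE elt_in /=; apply/existsP/idP => [[j /andP [mj /eqP /elt_inj <-]]|] //.
by move=> h; exists i; rewrite h eqxx.
Qed.

Lemma supp_sub mm : supp mm `<=` E.
Proof. by apply/fsubsetP => e; rewrite !inE => /andP []. Qed.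

Lemma sq_E t (i : 'I_n) : sqfree_mon E t i = (elt i \in t) :> nat.
Proof. by rewrite /sqfree_mon mnmE. Qed.

Lemma supp_sq t : t `<=` E -> supp (sqfree_mon E t) = t.
Proof.
move=> tE; apply/fsetP => e; case eE: (e \in E); last first.
  apply/idP/idP => [/(fsubsetP (supp_sub _))|/(fsubsetP tE)]; by rewrite eE.
have [i <-] := elt_onto eE.
by rewrite in_supp_elt sq_E; case: (elt i \in t).
Qed.

Lemma sq_inj s t : s `<=` E -> t `<=` E -> sqfree_mon E s = sqfree_mon E t -> s = t.
Proof. by move=> sE tE e; rewrite -(supp_sq sE) -(supp_sq tE) e. Qed.

Lemma supp_subP mm B : (supp mm `<=` B) = [forall i, (mm i != 0%N) ==> (elt i \in B)].
Proof.
apply/fsubsetP/forallP => [h i|h e].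
  by apply/implyP => mi; apply: h; rewrite in_supp_elt.
move=> es; have [i ei] := elt_onto (fsubsetP (supp_sub mm) e es).
by move: es; rewrite -ei in_supp_elt => mi; have := h i; rewrite mi.
Qed.

Lemma evalX (R : realType) mm B :
  ('X_[mm]).@[@char_pt R E B] = (supp mm `<=` B)%:R.
Proof.
rewrite mevalX supp_subP /char_pt; case: forallP => h.
  by rewrite big1 // => i _; have := h i; case: (mm i =P 0%N) => [->|_] //= ->; rewrite expr1n.
have [i] : exists i, ~~ ((mm i != 0%N) ==> (elt i \in B)).
  by apply/existsP; rewrite -negb_forall; apply/forallP.
rewrite negb_imply => /andP [mi eB].
by rewrite (bigD1 i) //= (negPf eB) expr0n (negPf mi) mul0r.
Qed.

Lemma lex_sq s t : s `<=` E -> t `<=` E -> lexlt s t ->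
  lex_lt (sqfree_mon E s) (sqfree_mon E t).
Proof.
move=> sE tE [e [et es he]].
have [i ei] := elt_onto (fsubsetP tE e et).
exists i; split.
  by move=> j ji; rewrite !sq_E he // -ei elt_lt.
by rewrite !sq_E ei et (negPf es).
Qed.

Lemma lex_supp a b : lex_lt a b -> (forall i, (b i <= 1)%N) -> lexlt (supp a) (supp b).
Proof.
move=> [i [hj hi]] hb; exists (elt i); split.
- by rewrite in_supp_elt -lt0n (leq_ltn_trans _ hi).
- rewrite in_supp_elt negbK; move: hi (hb i); case: (a i) => // k.
  by case: (b i) => // -[] // [].
- move=> e' he'; case e'E: (e' \in E); last first.
    apply/idP/idP => [/(fsubsetP (supp_sub _))|/(fsubsetP (supp_sub _))]; by rewrite e'E.
  move: he'; have [j <-] := elt_onto e'E; rewrite elt_lt => ji.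
  by rewrite !in_supp_elt hj.
Qed.

End Elt.


Lemma sum_nz (R : ringType) (T : eqType) (L : seq T) (Q : pred T) (F : T -> R) :
  \sum_(p <- L | Q p) F p != 0 -> exists p, [/\ p \in L, Q p & F p != 0].
Proof.
elim: L => [|x L IH]; first by rewrite big_nil eqxx.
rewrite big_cons; case Qx: (Q x); last first.
  by move/IH => [p [pL Qp Fp]]; exists p; rewrite inE pL orbT.
case Fx: (F x == 0).
  by rewrite (eqP Fx) add0r => /IH [p [pL Qp Fp]]; exists p; rewrite inE pL orbT.
by move=> _; exists x; rewrite inE eqxx Fx.
Qed.

Section Trans.
Variable R : realType.
Variables (E : {fset nat}) (P : {fset {fset nat}}).
Local Notation n := #|`E|.
Local Notation sq := (sqfree_mon E).

Lemma NS_lift r t : r `<=` t -> t `<=` E -> NS R E P r -> NS R E P t.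
Proof.
move=> rt tE [L [hL hc hv]]; set d := t `\` r.
have rd : r `|` d = t.
  apply/fsetP => x; rewrite !inE; case xr: (x \in r) => //=.
  by rewrite (fsubsetP rt).
have lexd : forall q, lexlt q r -> lexlt (q `|` d) t.
  move=> q [e [er eq he]]; exists e; split.
  - exact: (fsubsetP rt).
  - by rewrite !inE (negPf eq) er.
  - move=> e' /he; rewrite !inE => ->; rewrite -{2}rd !inE.
    by case: (e' \in r).
exists (map (fun p => (p.1 `|` d, p.2)) L); split.
- move=> _ /mapP [p pL ->] /=; have [pE pr] := hL p pL; split.
    by rewrite fsubUset pE (fsubset_trans (fsubsetDl _ _) tE).
  by case: pr => [->|/lexd]; [left | right].
- suff -> : coef (map (fun p => (p.1 `|` d, p.2)) L) t = coef L r by [].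
  rewrite /coef big_map big_seq_cond [RHS]big_seq_cond; apply: eq_bigl => p.
  case pL: (p \in L) => //=; have [_ [->|pr]] := hL p pL; first by rewrite rd !eqxx.
  have -> : (p.1 == r) = false by apply/negP => /eqP e; rewrite e in pr; exact: lexlt_irr pr.
  by apply/negP => /eqP e; have := lexd _ pr; rewrite e => /lexlt_irr.
- move=> B BP; rewrite /ev big_map.
  case dB: (d `<=` B).
    by rewrite -[RHS](hv B BP) /ev; apply: eq_big => // p /=; rewrite fsubUset dB andbT.
  by rewrite big_pred0 // => p /=; rewrite fsubUset dB andbF.
Qed.

Lemma NS_to_ideal t : t `<=` E -> NS R E P t ->
  in_initial_ideal (@vanishing_ideal R E P) 'X_[sq t].
Proof.
move=> tE [L [hL hc hv]].
pose f : {mpoly R[n]} := \sum_(p <- L) p.2 *: 'X_[sq p.1].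
have fc : forall mm, f@_mm = \sum_(p <- L | sq p.1 == mm) p.2.
  move=> mm; rewrite /f raddf_sum /= [RHS]big_mkcond; apply: eq_bigr => p _.
  by rewrite mcoeffZ mcoeffX; case: (sq p.1 == mm); rewrite ?mulr1 ?mulr0.
have fct : f@_(sq t) = coef L t.
  rewrite fc /coef big_seq_cond [RHS]big_seq_cond; apply: eq_bigl => p.
  case pL: (p \in L) => //=; have [pE _] := hL p pL.
  by apply/eqP/eqP => [/(sq_inj pE tE)|->].
have fI : vanishing_ideal P f.
  move=> B BP; rewrite -[RHS](hv B BP) /f raddf_sum /= /ev [RHS]big_mkcond big_seq [RHS]big_seq.
  apply: eq_bigr => p pL; have [pE _] := hL p pL.
  rewrite mevalZ evalX supp_sq //; case: (p.1 `<=` B); by rewrite ?mulr1 ?mulr0.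
have fl : lead_mon f (sq t).
  split; first by rewrite mcoeff_msupp fct.
  move=> mm; rewrite mcoeff_msupp fc => /sum_nz [p [pL /eqP <- _]] ne.
  have [pE [pt|pt]] := hL p pL; first by rewrite pt eqxx in ne.
  exact: lex_sq.
exists 1%N, (fun _ => ((f@_(sq t))^-1)%:MP), (fun _ => f@_(sq t) *: 'X_[sq t]); split.
  by move=> i; exists f; split => //; exists (sq t).
rewrite big_ord1 mul_mpolyC scalerA mulVf ?scale1r //.
by rewrite fct.
Qed.

Lemma lead_to_NS (f : {mpoly R[n]}) mm : vanishing_ideal P f -> lead_mon f mm ->
  (forall i, (mm i <= 1)%N) -> NS R E P (supp mm).
Proof.
move=> fI [mmf hl] ab.
exists [seq (supp mm', f@_mm') | mm' <- msupp f]; split.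
- move=> _ /mapP [mm' mf ->] /=; split; first exact: supp_sub.
  case: (eqVneq mm' mm) => [->|ne]; first by left.
  by right; apply: lex_supp => //; apply: hl.
- have -> : coef [seq (supp mm', f@_mm') | mm' <- msupp f] (supp mm) =
            \sum_(mm' <- msupp f | mm' == mm) f@_mm'.
    rewrite /coef big_map big_seq_cond [RHS]big_seq_cond; apply: eq_bigl => x /=.
    case xf: (x \in msupp f) => //=.
    case: (eqVneq x mm) => [->|ne]; first by rewrite eqxx.
    apply/negP => /eqP e; have := lex_supp (hl x xf ne) ab.
    by rewrite e => /lexlt_irr.
  rewrite big_mkcond (bigD1_seq mm) //= ?msupp_uniq // eqxx big1 ?addr0.
    by rewrite -mcoeff_msupp.
  by move=> x /negPf ->.
- move=> B BP; rewrite -(fI B BP) mevalE /ev big_map big_mkcond.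
  apply: eq_bigr => x _; rewrite -mevalX evalX.
  by case: (supp x `<=` B); rewrite ?mulr1 ?mulr0.
Qed.

Lemma ideal_to_NS t : t `<=` E ->
  in_initial_ideal (@vanishing_ideal R E P) 'X_[sq t] -> NS R E P t.
Proof.
move=> tE [k [g [s [hs eq]]]].
have := congr1 (mcoeff (sq t)) eq; rewrite mcoeffX eqxx raddf_sum /= => h1.
have : \sum_(i < k) (g i * s i)@_(sq t) != 0 by rewrite -h1 oner_eq0.
move=> /sum_nz [i [_ _]].
have [f [fI [mm [fl si]]]] := hs i.
rewrite si -scalerAr mcoeffZ mulf_eq0 negb_or => /andP [_].
rewrite -mcoeff_msupp (perm_mem (msuppMX _ _)) => /mapP [m' _ am].
have mle : forall j, (mm j <= sq t j)%N by move=> j; rewrite am mnmDE leq_addr.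
have ab : forall j, (mm j <= 1)%N by move=> j; apply: leq_trans (mle j) _; rewrite sq_E leq_b1.
apply: (NS_lift _ tE (lead_to_NS fI fl ab)).
apply/fsubsetP => e es; have [j ej] := elt_onto (fsubsetP (supp_sub mm) e es).
move: es; rewrite -ej in_supp_elt -lt0n => /leq_trans /(_ (mle j)).
by rewrite sq_E lt0b.
Qed.

Lemma Slex_NS t : Slex R E P t <-> t `<=` E /\ ~ NS R E P t.
Proof.
split => [[tE h]|[tE h]]; split => //.
  by move=> /(NS_to_ideal tE).
by move=> /(ideal_to_NS tE).
Qed.

End Trans.


Lemma cext (K L : complex) : (forall t, K t <-> L t) -> K = L.
Proof.
move=> h; apply: functional_extensionality => t.
exact: propositional_extensionality.
Qed.

Unset Implicit Arguments.

Theorem theorem1p1 (R : realType) (E : {fset nat}) (Bs : {fset {fset nat}})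
  (m : nat) :
  is_matroid E Bs ->
  m \in E -> (forall e, e \in E -> (e <= m)%N) ->
  [/\ (~~ is_loop Bs m -> ~~ is_coloop Bs m ->
        Slex R E Bs =
        cunion (cunion (Slex R (E `\ m) (del_bases Bs m))
                       (Slex R (E `\ m) (con_bases Bs m)))
               (ccone m (cinter (Slex R (E `\ m) (del_bases Bs m))
                                (Slex R (E `\ m) (con_bases Bs m))))),
      (is_coloop Bs m -> Slex R E Bs = Slex R (E `\ m) (del_bases Bs m)) &
      (is_loop Bs m -> Slex R E Bs = Slex R (E `\ m) (con_bases Bs m))].
Proof.
move=> _ mE mmax.
set P0 := [fset B in Bs | m \notin B].
set P1 := [fset B `\ m | B in [fset B in Bs | m \in B]].
have A1 := @NS_A1 R E m mmax Bs.
have A2 := @NS_A2 R E m mmax Bs.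
have A3 := @NS_A3 R E m mE mmax Bs.
have NB := @NS_B R E m mE mmax Bs.
have key : forall t, Slex R E Bs t <->
   (m \notin t /\ t `<=` E `\ m /\ ~ (NS R (E `\ m) P0 t /\ NS R (E `\ m) P1 t)) \/
   (m \in t /\ t `\ m `<=` E `\ m /\ ~ (NS R (E `\ m) P0 (t `\ m) \/ NS R (E `\ m) P1 (t `\ m))).
  move=> t; rewrite Slex_NS; case mt: (m \in t).
    have tU : t = (t `\ m) `|` [fset m] by rewrite Um_D1.
    split.
      move=> [tE nN]; right; split => //; split; first exact: subD.
      by rewrite -NB ?subD // -tU.
    case=> [[]//|[_ [sE nN]]]; split; first by rewrite tU subUmE.
    by rewrite tU NB.
  split.
    move=> [tE nN]; left; split => //.
    have tE' : t `<=` E `\ m by rewrite sub_low ?mt.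
    by split => // -[h0 h1]; apply: nN; apply: A3.
  case=> [[_ [tE' nN]]|[]//]; split; first exact: subE tE'.
  by move=> h; apply: nN; split; [apply: A1 | apply: A2].
split.
- move=> nl nc; rewrite /del_bases /con_bases (negPf nl) (negPf nc) -/P0 -/P1.
  apply: cext => t; rewrite key /cunion /ccone /cinter !Slex_NS.
  split.
    case=> [[mt [tE nN]]|[mt [sE nN]]].
      have [h|h] := not_and_or _ _ nN; [left; left | left; right]; split => //.
    right; right; exists (t `\ m); last by rewrite Um_D1.
    by split; apply/Slex_NS; split => // h; apply: nN; [left | right].
  case=> [[[tE nN]|[tE nN]]|[[[tE nN] _]|[s [/Slex_NS [sE n0] /Slex_NS [_ n1]] ->]]].
  + left; split; first exact: (@notin_low E m mmax t tE).
    by split => // -[].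
  + left; split; first exact: (@notin_low E m mmax t tE).
    by split => // -[].
  + left; split; first exact: (@notin_low E m mmax t tE).
    by split => // -[].
  + right; split; first by rewrite !inE eqxx orbT.
    by rewrite D1_Um ?(notin_low mmax sE) //; split => // -[].
- move=> col; rewrite /del_bases col.
  have eB : [fset B in Bs | m \in B] = Bs.
    apply/fsetP => B; rewrite !inE; case BB: (B \in Bs) => //=.
    by move/allP: col => /(_ B BB).
  have P1e : P1 = [fset B `\ m | B in Bs] by rewrite /P1 eB.
  rewrite -P1e.
  have N0 : forall t, t `<=` E `\ m -> NS R (E `\ m) P0 t.
    move=> t tE; apply: NS_vac => // B; rewrite !inE => /andP [BB mB].
    by move/allP: col => /(_ B BB); rewrite (negPf mB).
  apply: cext => t; rewrite key Slex_NS; split.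
    case=> [[mt [tE nN]]|[mt [sE nN]]].
      by split => // h; apply: nN; split => //; apply: N0.
    by exfalso; apply: nN; left; apply: N0.
  move=> [tE nN]; left; split; first exact: (@notin_low E m mmax t tE).
  by split => // -[_ h]; apply: nN.
- move=> lo; rewrite /con_bases lo.
  have eB : P0 = Bs.
    apply/fsetP => B; rewrite !inE; case BB: (B \in Bs) => //=.
    by move/allP: lo => /(_ B BB).
  have N1 : forall t, t `<=` E `\ m -> NS R (E `\ m) P1 t.
    move=> t tE; apply: NS_vac => // B' /imfsetP [B /= BP _]; move: BP.
    rewrite !inE => /andP [BB mB].
    by move/allP: lo => /(_ B BB); rewrite mB.
  apply: cext => t; rewrite key Slex_NS -eB; split.
    case=> [[mt [tE nN]]|[mt [sE nN]]].
      by split => // h; apply: nN; split => //; apply: N1.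
    by exfalso; apply: nN; right; apply: N1.
  move=> [tE nN]; left; split; first exact: (@notin_low E m mmax t tE).
  by split => // -[h _]; apply: nN.
Qed.
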